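(* Let $n$ and $\delta$ be given, and let $m$ be an integer. Set $$\ell=\frac{2m-n-2\log(1/\delta)}{3},\qquad v=\frac{n-\ell}{2},$$ where the parameters are assumed to be such that $\ell$ and $v$ are nonnegative integers. Consider the following construction, for a chosen representation of $\mathbb{F}_{2^{n-v}}$ as $(n-v)$-bit strings given by coordinates in a basis over $\mathbb{F}_2$ (so that field addition is bitwise XOR). $\mathsf{Gen}(w)$, for $w\in\{0,1\}^n$: 1. Parse $w=a\|b$ with $a\in\{0,1\}^{n-v}$, viewed as an element of $\mathbb{F}_{2^{n-v}}$, and $b\in\{0,1\}^v$. 2. Choose $i$ uniformly from $\mathbb{F}_{2^{n-v}}$. 3. Output $R=[ia]_{v+1}^{n-v}$ (so $|R|=\ell$) and $P=(i,\sigma)$, where $\sigma=[ia]_1^v\oplus b$. $\mathsf{Rep}(w,(i',\sigma'))$: - Output $[i'a]_{v+1}^{n-v}$ if $\sigma'=[i'a]_1^v\oplus b$. - Otherwise output $\perp$. Then there exist a basis of $\mathbb{F}_{2^{n-v}}$ over $\mathbb{F}_2$, a distribution $W$ on $\{0,1\}^n$ with $\mathbf{H}_\infty(W)=m$, and an adversary $A$ with the following property. Sample $w\leftarrow W$, let $(R,P)=\mathsf{Gen}(w)$, and let $P'=A(R,P)$. Then, with probability at least $\delta/2$, both $P'\ne P$ and $\mathsf{Rep}(w,P')\ne\perp$ hold. That is, the post-application robustness of this construction is violated with probability at least $\delta/2$.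
   Context: - $[x]_i^j$ denotes the substring $x_i\cdots x_j$ of a bit string $x$. - $\mathbf{H}_\infty(W)=-\log_2\max_w\Pr[W=w]$. - All logarithms are base 2. - The construction is the robust extractor of Dodis, Katz, Reyzin and Smith (Crypto 2006). - The choice $v=(n-\ell)/2$ with $\ell=(2m-n-2\log(1/\delta))/3$ is the setting that construction prescribes for post-application robustness $\delta$. - The adversary is computationally unbounded and sees both $R$ and $P$. *)

(* Defs.v *)
From HB Require Import structures.
From mathcomp Require Import all_boot all_order all_algebra.
From mathcomp Require Import reals exp.
Set Implicit Arguments. Unset Strict Implicit. Unset Printing Implicit Defensive.
Import Order.TTheory GRing.Theory Num.Theory.
Local Open Scope ring_scope.

Definition log2 {R : realType} (x : R) : R := ln x / ln 2.

Section Construction.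
Variable F : finFieldType.

(* F_2-linear combination of a family e of k field elements with
   coefficient bit string s (bit j = coefficient of e_j, j = 0..k-1,
   i.e. the paper's positions 1..k). *)
Definition toF (k : nat) (e : k.-tuple F) (s : seq bool) : F :=
  \sum_(j < k) (if nth false s j then tnth e j else 0).

Definition is_basisF2 (k : nat) (e : k.-tuple F) : Prop :=
  forall x : F, exists! c : k.-tuple bool, toF e c = x.

Definition coords (k : nat) (e : k.-tuple F) (x : F) : seq bool :=
  match [pick c : k.-tuple bool | toF e c == x] with
  | Some c => tval c
  | None => nseq k false
  end.

Definition xors (s t : seq bool) : seq bool :=
  map (fun p => p.1 (+) p.2) (zip s t).

(* Gen(w) with the random choice i made explicit; k = n - v is the length
   of a, and w = a || b.  Returns (R, P) with P = (i, sigma). *)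
Definition Gen (k v : nat) (e : k.-tuple F) (w : seq bool) (i : F)
    : seq bool * (F * seq bool) :=
  let a := toF e (take k w) in
  let b := drop k w in
  let y := coords e (i * a) in
  (drop v y, (i, xors (take v y) b)).

(* Rep(w, (i', sigma')); None stands for the failure symbol ⊥ *)
Definition Rep (k v : nat) (e : k.-tuple F) (w : seq bool) (P' : F * seq bool)
    : option (seq bool) :=
  let a := toF e (take k w) in
  let b := drop k w in
  let y := coords e (P'.1 * a) in
  if P'.2 == xors (take v y) b then Some (drop v y) else None.
End Construction.

Definition is_distr {R : realType} {T : finType} (W : {ffun T -> R}) : Prop :=
  (forall x, 0 <= W x) /\ \sum_x W x = 1.

Definition Hinf {R : realType} {T : finType} (W : {ffun T -> R}) : R :=
  - log2 (\big[Num.max/0]_x W x).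

Definition attack_prob {R : realType} (F : finFieldType) (n v : nat)
    (e : (n - v).-tuple F) (W : {ffun n.-tuple bool -> R})
    (A : seq bool -> F * seq bool -> F * seq bool) : R :=
  \sum_(w : n.-tuple bool) \sum_(i : F)
    W w / #|F|%:R *
    (let RP := Gen v e w i in
     let P' := A RP.1 RP.2 in
     if (P' != RP.2) && (Rep v e w P' != None) then 1 else 0).

(* Main.v *)
Require Import Defs.
From HB Require Import structures.
From mathcomp Require Import all_boot all_order all_algebra all_fingroup all_solvable all_field.
From mathcomp Require Import reals exp.
From mathcomp Require Import zify ring lra.
Import Order.TTheory GRing.Theory Num.Theory.
Local Open Scope ring_scope.
Set Implicit Arguments. Unset Strict Implicit. Unset Printing Implicit Defensive.

Section F2.
Variable F : finFieldType.
Variable k : nat.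
Hypothesis hF : #|F| = (2 ^ k)%N.
Hypothesis hk : (0 < k)%N.

Lemma char2 : (2%:R : F) = 0.
Proof.
have := card_finPcharP hF (isT : prime 2).
by move/pcharf0.
Qed.

Lemma addxx (x : F) : x + x = 0.
Proof. by rewrite -mulr2n -mulr_natr char2 mulr0. Qed.

Lemma prim : exists g : F, g != 0 /\ forall x, x != 0 -> exists j, x = g ^+ j.
Proof.
have /cyclicP [u hu] := field_unit_group_cyclic [group of [set: {unit F}]].
exists (FinRing.uval u); split; first by rewrite -unitfE (valP u).
move=> x x0.
have ux : x \is a GRing.unit by rewrite unitfE.
have : (Sub x ux : {unit F}) \in <[u]>%g by rewrite -hu inE.
case/cycleP => j hj; exists j.
by rewrite -FinRing.val_unitX -hj.
Qed.
End F2.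

Section Basis.
Variable F : finFieldType.
Variable k : nat.
Hypothesis hF : #|F| = (2 ^ k)%N.
Variable g : F.
Hypothesis hg : forall x, x != 0 -> exists j, x = g ^+ j.

Definition spS (D : nat) (s : seq bool) : F :=
  \sum_(0 <= j < D) (if nth false s j then g ^+ j else 0).

Definition xorseq D (s t : seq bool) := mkseq (fun j => nth false s j (+) nth false t j) D.

Lemma spS_add D s t : spS D s + spS D t = spS D (xorseq D s t).
Proof.
rewrite /spS -big_split; apply: eq_big_nat => j /andP[_ hj].
rewrite nth_mkseq //.
by case: (nth false s j); case: (nth false t j); rewrite /= ?addr0 ?add0r ?(addxx hF).
Qed.

Lemma spS_shift D s : g * spS D s = spS D.+1 (false :: s).
Proof.
rewrite /spS big_nat_recl //= add0r mulr_sumr; apply: eq_bigr => j _.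
by case: nth; rewrite ?mulr0 // exprS.
Qed.

Lemma spS_recr D s : spS D.+1 s = spS D s + (if nth false s D then g ^+ D else 0).
Proof. by rewrite /spS big_nat_recr. Qed.

Lemma spS_nil D : spS D [::] = 0.
Proof. by rewrite /spS big1 // => j _; rewrite nth_nil. Qed.

Lemma no_rel D s : (D < k)%N -> g ^+ D != spS D s.
Proof.
move=> hD; apply/negP => /eqP hrel.
pose V (y : F) := exists s, y = spS D s.
have V0 : V 0 by exists [::]; rewrite spS_nil.
have VD : forall y z, V y -> V z -> V (y + z).
  by move=> y z [s1 ->] [s2 ->]; exists (xorseq D s1 s2); rewrite spS_add.
have Vg : forall y, V y -> V (g * y).
  move=> y [s1 ->]; rewrite spS_shift spS_recr; apply: VD; first by exists (false :: s1).
  by case: nth => //; exists s.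
have D0 : (0 < D)%N.
  case: D hD hrel {V0 VD Vg V} => [|D] hD hrel //.
  by move: hrel; rewrite expr0 /spS big_geq // => /eqP; rewrite oner_eq0.
have V1 : V 1.
  exists [:: true]; rewrite /spS (big_ltn D0) /= big_add1 /= big1 ?addr0 // => j _.
  by rewrite nth_nil.
have Vp : forall N, V (g ^+ N).
  by elim => [|N IH]; rewrite ?expr0 // exprS; apply: Vg.
have Vall : forall x, V x.
  move=> x; case: (eqVneq x 0) => [->|x0] //.
  by have [j ->] := hg x0.
pose f := fun c : D.-tuple bool => spS D c.
have sub : forall x, x \in codom f.
  move=> x; have [s1 ->] := Vall x; apply/codomP.
  exists [tuple nth false s1 j | j < D]; rewrite /f /spS; apply: eq_big_nat => j /andP[_ hj].
  by rewrite -[j]/(nat_of_ord (Ordinal hj)) nth_mktuple.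
have : (#|F| <= 2 ^ D)%N.
  apply: leq_trans (_ : #|codom f| <= _)%N.
    by apply: subset_leq_card; apply/subsetP => x _; apply: sub.
  apply: leq_trans (card_size _) _.
  by rewrite size_codom card_tuple card_bool.
by rewrite hF leq_exp2l // leqNgt hD.
Qed.

Lemma spS_zero D s : (D <= k)%N -> spS D s = 0 -> forall j, (j < D)%N -> nth false s j = false.
Proof.
elim: D => [|D IH] hD; first by [].
rewrite spS_recr; case hs: (nth false s D) => h0.
  have : g ^+ D = spS D s.
    by rewrite -[g ^+ D]add0r -(addxx hF (spS D s)) -addrA h0 addr0.
  by move/eqP; rewrite (negbTE (no_rel s hD)).
rewrite addr0 in h0 => j; rewrite ltnS leq_eqVlt => /orP[/eqP ->//|hj].
by apply: IH => //; apply: ltnW.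
Qed.

Lemma spS_inj s t : spS k s = spS k t -> forall j, (j < k)%N -> nth false s j = nth false t j.
Proof.
move=> h j hj.
have : spS k (xorseq k s t) = 0 by rewrite -spS_add h (addxx hF).
move/spS_zero => /(_ (leqnn k) j hj); rewrite nth_mkseq //.
by case: (nth false s j); case: (nth false t j).
Qed.

Definition pbasis : k.-tuple F := [tuple g ^+ j | j < k].

Lemma toF_spS s : toF pbasis s = spS k s.
Proof. by rewrite /toF /spS big_mkord; apply: eq_bigr => j _; rewrite tnth_mktuple. Qed.

Lemma toF_inj s t : size s = k -> size t = k -> toF pbasis s = toF pbasis t -> s = t.
Proof.
rewrite !toF_spS => hs ht h; apply: (@eq_from_nth _ false); first by rewrite hs ht.
by move=> j; rewrite hs; apply: spS_inj.
Qed.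

Lemma basis_e : is_basisF2 pbasis.
Proof.
move=> x.
have finj : injective (fun c : k.-tuple bool => toF pbasis c).
  by move=> c1 c2 /toF_inj h; apply: val_inj; apply: h; rewrite size_tuple.
have : x \in codom (fun c : k.-tuple bool => toF pbasis c).
  by apply: inj_card_onto => //; rewrite card_tuple card_bool hF.
case/codomP => c hc; exists c; split => // c' hc'.
by apply: finj; rewrite hc'.
Qed.

Lemma coordsP x : toF pbasis (coords pbasis x) = x.
Proof.
rewrite /coords; case: pickP => [c /eqP //|h].
have [c [hc _]] := basis_e x.
by move: (h c); rewrite hc eqxx.
Qed.

Lemma size_coords x : size (coords pbasis x) = k.
Proof. by rewrite /coords; case: pickP => [c _|_]; rewrite ?size_tuple ?size_nseq. Qed.

Lemma coords_toF s : size s = k -> coords pbasis (toF pbasis s) = s.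
Proof. by move=> hs; apply: toF_inj => //; rewrite ?size_coords // coordsP. Qed.

Lemma size_xors s t : size (xors s t) = minn (size s) (size t).
Proof. by rewrite /xors size_map size_zip. Qed.

Lemma nth_xors s t j : size s = size t -> (j < size s)%N ->
  nth false (xors s t) j = nth false s j (+) nth false t j.
Proof.
move=> hst hj; rewrite /xors (nth_map (false, false)) ?size_zip ?hst ?minnn -?hst //.
by rewrite nth_zip.
Qed.

Lemma toF_xors s t : size s = k -> size t = k -> toF pbasis (xors s t) = toF pbasis s + toF pbasis t.
Proof.
move=> hs ht; rewrite /toF -big_split; apply: eq_bigr => j _ /=.
rewrite nth_xors ?hs ?ht //.
by case: (nth false s j); case: (nth false t j); rewrite /= ?addr0 ?add0r ?(addxx hF).
Qed.

Lemma coords_add x y : coords pbasis (x + y) = xors (coords pbasis x) (coords pbasis y).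
Proof.
rewrite -{1}(coordsP x) -{1}(coordsP y) -toF_xors ?size_coords //.
by rewrite coords_toF // size_xors !size_coords minnn.
Qed.

End Basis.

Definition posF (ps : seq nat) (w : seq bool) : bool := all (fun j => ~~ nth false w j) ps.

Section Count.
Local Open Scope nat_scope.
Variable n : nat.

Definition flip (j : nat) (w : n.-tuple bool) : n.-tuple bool :=
  [tuple (if i == j :> nat then ~~ tnth w i else tnth w i) | i < n].

Lemma nth_flip j w p : nth false (flip j w) p =
  if p == j then ~~ nth false w p && (p < n) else nth false w p.
Proof.
case: (ltnP p n) => hp.
  by rewrite -[p]/(nat_of_ord (Ordinal hp)) nth_mktuple /= (tnth_nth false) /= andbT.
by rewrite !nth_default ?size_tuple // andbF; case: ifP.
Qed.

Lemma flipK j : involutive (flip j).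
Proof.
move=> w; apply: eq_from_tnth => i; rewrite !tnth_mktuple.
by case: (i == j :> nat) => /=; rewrite ?negbK.
Qed.

Lemma count_free ps : uniq ps -> all (fun j => j < n) ps ->
  ((\sum_(w : n.-tuple bool) (posF ps w : nat)) * 2 ^ size ps = 2 ^ n)%N.
Proof.
elim: ps => [|j ps IH] /=.
  move=> _ _; rewrite muln1 -(card_bool) -card_tuple -sum1_card.
  by apply: eq_bigr.
case/andP => jps ups /andP[jn aps].
rewrite -(IH ups aps) expnS mulnA; congr (_ * _)%N.
have inv : forall w, posF ps (flip j w) = posF ps w.
  move=> w; apply: eq_in_all => p pin; rewrite nth_flip.
  by case: eqP => // ep; move: jps; rewrite -ep pin.
have -> : (\sum_(w : n.-tuple bool) (posF ps w : nat) =
    \sum_(w : n.-tuple bool) ((~~ nth false w j) && posF ps w : nat) +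
    \sum_(w : n.-tuple bool) ((nth false w j) && posF ps w : nat))%N.
  by rewrite -big_split; apply: eq_bigr => w _; case: nth; case: posF.
rewrite (reindex_inj (can_inj (flipK j)) (F := fun w : n.-tuple bool => ((nth false w j) && posF ps w : nat))).
have -> : (\sum_(w : n.-tuple bool) ((nth false (flip j w) j) && posF ps (flip j w) : nat) =
    \sum_(w : n.-tuple bool) ((~~ nth false w j) && posF ps w : nat))%N.
  by apply: eq_bigr => w _; rewrite inv nth_flip eqxx jn andbT.
by rewrite muln2 -addnn.
Qed.
End Count.

Section Attack.
Variable F : finFieldType.
Variables n v l c0 L : nat.
Let k := (n - v)%N.
Hypothesis hF : #|F| = (2 ^ k)%N.
Variable g : F.
Hypothesis g0 : g != 0.
Hypothesis hg : forall x, x != 0 -> exists j, x = g ^+ j.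
Hypothesis hn : n = (2 * v + l)%N.
Hypothesis hv : v = (c0 + l + L)%N.

Let e := pbasis k g.

Definition Adv (Rr : seq bool) (P : F * seq bool) : F * seq bool :=
  let i := P.1 in let sg := P.2 in
  let ch := take c0 sg ++ nseq (v - c0) false ++ Rr in
  let t := g ^+ (l + L) in
  (i + i * t, xors sg (take v (coords e (t * toF e ch)))).

Lemma hk : k = (v + l)%N. Proof. rewrite /k hn; lia. Qed.

Lemma window (f : nat -> F) a m K : (a + m <= K)%N ->
  (forall j, (j < a)%N || (a + m <= j)%N -> f j = 0) ->
  \sum_(0 <= j < K) f j = \sum_(0 <= p < m) f (a + p)%N.
Proof.
move=> hK hf.
rewrite (@big_cat_nat _ _ _ a 0 K) //=; try lia.
rewrite (@big_cat_nat _ _ _ (a + m) a K) //=; try lia.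
have -> : \sum_(0 <= i < a) f i = 0.
  rewrite big_nat_cond big1 // => j hj0; apply: hf; move: hj0; lia.
have -> : \sum_(a + m <= i < K) f i = 0.
  rewrite big_nat_cond big1 // => j hj0; apply: hf; move: hj0; lia.
rewrite add0r addr0 -{1}[a]add0n big_addn addnC addnK.
by apply: eq_bigr => p _; rewrite addnC.
Qed.

Lemma success (w : n.-tuple bool) (i : F) :
  i != 0 -> posF (iota k c0) w ->
  posF (iota (v - L) L) (coords e (i * toF e (take k w))) ->
  let RP := Gen v e w i in
  let P' := Adv RP.1 RP.2 in
  (P' != RP.2) && (Rep v e w P' != None).
Proof.
move=> i0 hsupp hgood.
rewrite /Gen /Rep /Adv /=.
set a := toF e (take k w).
set cx := coords e (i * a).
set b := drop (n - v) w.
set sg := xors (take v cx) b.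
set t := g ^+ (l + L).
set ch := take c0 sg ++ nseq (v - c0) false ++ drop v cx.
have kk := hk.
have kn : (k <= n)%N by lia.
have vk : (v <= k)%N by lia.
have scx : size cx = k by rewrite size_coords.
have sb : size b = v by rewrite size_drop size_tuple; lia.
have ssg : size sg = v by rewrite size_xors size_takel ?scx // sb minnn.
have sch : size ch = k.
  rewrite !size_cat size_takel ?ssg ?size_nseq ?size_drop ?scx; lia.
have hb : forall j, (j < c0)%N -> nth false b j = false.
  move=> j hj; rewrite nth_drop; apply/negbTE.
  by move/allP: hsupp; apply; rewrite mem_iota; apply/andP; split; lia.
have hgd : forall j, (v - L <= j < v)%N -> nth false cx j = false.
  by move=> j hj; apply/negbTE; move/allP: hgood; apply; rewrite mem_iota; lia.
have hch : forall j, (j < k)%N -> nth false ch j =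
    if (j < c0)%N then nth false cx j else if (j < v)%N then false else nth false cx j.
  move=> j hj; rewrite nth_cat size_takel ?ssg; last by lia.
  case: ifP => hj0.
    rewrite (nth_take _ hj0) nth_xors ?size_takel ?scx ?sb //; try lia.
    have hjv : (j < v)%N by lia.
    by rewrite (nth_take _ hjv) hb // addbF.
  rewrite nth_cat size_nseq; case: ifP => hj1.
    by rewrite nth_nseq hj1; case: ifP => //; lia.
  rewrite nth_drop; case: ifP; first by lia.
  by move=> _; congr nth; lia.
set d := xors cx ch.
have sd : size d = k by rewrite size_xors scx sch minnn.
have hd : forall j, (j < k)%N -> nth false d j =
    if (c0 <= j < c0 + l)%N then nth false cx j else false.
  move=> j hj; rewrite nth_xors ?scx ?sch // hch //.
  case: ifP => hj0; first by rewrite addbb; case: ifP => //; lia.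
  case: ifP => hj1.
    rewrite addbF; case: ifP => // hj2; apply: hgd; lia.
  by rewrite addbb; case: ifP => //; lia.
have hdx : toF e d = i * a + toF e ch by rewrite /d toF_xors ?coordsP.
set z := mkseq (fun j => if (v <= j)%N then nth false d (j - (l + L)) else false) k.
have sz : size z = k by rewrite size_mkseq.
have hz : toF e z = t * toF e d.
  rewrite !toF_spS /spS mulr_sumr.
  rewrite (@window _ v l k); last first.
  - move=> j hj; case: (ltnP j k) => hjk; last by rewrite nth_default ?sz.
    rewrite /z nth_mkseq //; case: (leqP v j) => hvj //; exfalso; lia.
  - lia.
  rewrite (@window _ c0 l k); last first.
  - move=> j hj; case: (ltnP j k) => hjk; last by rewrite nth_default ?sd // mulr0.
    have hc : (c0 <= j < c0 + l)%N = false by lia.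
    by rewrite hd // hc mulr0.
  - lia.
  apply: eq_big_nat => p hp.
  rewrite /z nth_mkseq; last by lia.
  rewrite leq_addr.
  have -> : (v + p - (l + L) = c0 + p)%N by lia.
  case: nth; rewrite ?mulr0 // /t -exprD; congr (g ^+ _); lia.
have hcz : coords e (t * (i * a + toF e ch)) = z by rewrite -hdx -hz coords_toF.
set ct := coords e (t * toF e ch).
have htx : coords e (t * (i * a)) = xors ct z.
  rewrite /ct -hcz -coords_add //; apply: f_equal.
  by rewrite mulrDr addrCA (addxx hF) addr0.
have ha : (i + i * t) * a = i * a + t * (i * a) by rewrite mulrDl mulrCA mulrA.
About coords_add.
rewrite ha (coords_add hF hg (i * a)) -/cx htx.
have sct : size ct = k by rewrite size_coords.
have sx1 : size (xors ct z) = k by rewrite size_xors sct sz minnn.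
have sx2 : size (xors cx (xors ct z)) = k by rewrite size_xors scx sx1 minnn.
have stv : forall s : seq bool, size s = k -> size (take v s) = v.
  by move=> s0 hs0; rewrite size_takel // hs0.
have heq : xors sg (take v ct) = xors (take v (xors cx (xors ct z))) b.
  have s1 : size (xors sg (take v ct)) = v by rewrite size_xors ssg stv // minnn.
  have s2 : size (xors (take v (xors cx (xors ct z))) b) = v by rewrite size_xors stv // sb minnn.
  apply: (@eq_from_nth _ false); first by rewrite s1 s2.
  move=> j; rewrite s1 => hj.
  rewrite nth_xors ?ssg ?stv // nth_xors ?stv ?sb //.
  rewrite (nth_take _ hj) (nth_take _ hj) /sg nth_xors ?stv ?sb // (nth_take _ hj).
  have hjk : (j < k)%N by lia.
  rewrite nth_xors ?scx ?sx1 // nth_xors ?sct ?sz // /z nth_mkseq //.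
  have -> : (v <= j)%N = false by lia.
  by case: (nth false cx j); case: (nth false ct j); case: (nth false b j).
rewrite heq eqxx andbT.
apply/negP => /eqP [] h _.
have : i * t == 0 by apply/eqP; apply: (addrI i); rewrite addr0.
by rewrite mulf_eq0 (negbTE i0) /= /t expf_eq0 (negbTE g0) andbF.
Qed.

Definition phi (i : F) (w : n.-tuple bool) : n.-tuple bool :=
  insubd w (coords e (i * toF e (take k w)) ++ drop k w).

Lemma val_phi i w : val (phi i w) = coords e (i * toF e (take k w)) ++ drop k w.
Proof.
rewrite /phi val_insubd size_cat size_coords size_drop size_tuple.
have -> : (k + (n - k) == n)%N = true by apply/eqP; rewrite /k; lia.
by [].
Qed.

Lemma phi_inj i : i != 0 -> injective (phi i).
Proof.
move=> i0 w1 w2 h; have := congr1 val h; rewrite !val_phi => hc.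
have hcx := congr1 (take k) hc; rewrite !take_size_cat ?size_coords // in hcx.
have hdr := congr1 (drop k) hc; rewrite !drop_size_cat ?size_coords // in hdr.
have kn : (k <= n)%N by rewrite /k; lia.
have ha : toF e (take k w1) = toF e (take k w2).
  apply: (mulfI i0); rewrite -(coordsP hF hg (i * _)) hcx.
  by rewrite coordsP.
have ht := toF_inj hF hg (size_takel _) (size_takel _) ha.
have hw : take k w1 ++ drop k w1 = take k w2 ++ drop k w2.
  by rewrite hdr ht // size_tuple.
by apply: val_inj; rewrite /= -(cat_take_drop k (val w1)) hw cat_take_drop.
Qed.

Lemma count_good i : i != 0 ->
  ((\sum_(w : n.-tuple bool) (posF (iota k c0) w &&
      posF (iota (v - L) L) (coords e (i * toF e (take k w))%R) : nat)) * 2 ^ (L + c0) = 2 ^ n)%N.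
Proof.
move=> i0.
have kk := hk.
set ps := iota (v - L) L ++ iota k c0.
have hps : forall w, posF ps (phi i w) = posF (iota k c0) w &&
      posF (iota (v - L) L) (coords e (i * toF e (take k w))).
  move=> w; rewrite /posF all_cat val_phi andbC; congr (_ && _).
    apply: eq_in_all => j; rewrite mem_iota => hj.
    rewrite nth_cat size_coords; case: ifP => //; first by lia.
    move=> _; rewrite nth_drop; congr (~~ nth _ _ _); lia.
  apply: eq_in_all => j; rewrite mem_iota => hj.
  by rewrite nth_cat size_coords; case: ifP => //; lia.
rewrite (eq_bigr (fun w : n.-tuple bool => (posF ps (phi i w) : nat))); last by move=> w _; rewrite hps.
have -> : (\sum_(w : n.-tuple bool) (posF ps (phi i w) : nat) = \sum_(w : n.-tuple bool) (posF ps w : nat))%N.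
  by rewrite [RHS](reindex_inj (phi_inj i0)).
have -> : (L + c0 = size ps)%N by rewrite size_cat !size_iota addnC.
apply: count_free.
  rewrite cat_uniq !iota_uniq /= andbT; apply/hasPn => j; rewrite !mem_iota => hj.
  lia.
rewrite /ps all_cat; apply/andP; split; apply/allP => j; rewrite mem_iota; lia.
Qed.

End Attack.

Lemma params (R : realType) (n : nat) (delta : R) (m : int) (l v : nat)
    (hdelta0 : 0 < delta) (hdelta1 : delta < 1)
    (hm : m <= n%:Z)
    (hl : l%:R = (2 * m%:~R - n%:R - 2 * log2 (1 / delta)) / 3 :> R)
    (hv : v%:R = (n%:R - l%:R) / 2 :> R) :
  exists mn L c0 : nat, [/\ m = mn%:Z, n = (2 * v + l)%N, v = (c0 + l + L)%N /\ (1 <= L)%N,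
     c0 = (n - mn)%N /\ (mn <= n)%N & delta = ((2:R) ^+ L)^-1].
Proof.
have hn : n = (2 * v + l)%N.
  apply/eqP; rewrite -(eqr_nat R) natrD natrM hv; apply/eqP; field => //.
set Lg := log2 (1 / delta) in hl.
have hLg : Lg = m%:~R - v%:R - 2 * l%:R.
  move: hl hv; lra.
have Lgpos : 0 < Lg.
  rewrite /Lg /log2 divr_gt0 // ln_gt0 //.
    by rewrite div1r invf_gt1.
  by rewrite ltr1n.
have [mn em] : exists mn : nat, m = mn%:Z.
  case: m hm hLg {hl} => [mn|mn] hm hLg; first by exists mn.
  exfalso; move: Lgpos; rewrite hLg NegzE mulrNz.
  have : 0 <= (mn.+1)%:~R :> R by rewrite ler0z.
  have : 0 <= v%:R :> R by [].
  have : 0 <= l%:R :> R by [].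
  lra.
subst m.
have hmn : (v + 2 * l < mn)%N.
  rewrite -(ltr_nat R) natrD natrM; move: Lgpos; rewrite hLg -[mn%:~R]/(mn%:R).
  lra.
have hmn2 : (mn <= n)%N by rewrite -lez_nat.
exists mn; exists (mn - v - 2 * l)%N; exists (n - mn)%N.
split => //; try lia.
have hL : Lg = (mn - v - 2 * l)%N%:R.
  rewrite hLg !natrB ?natrM //; try lia.
move: hL; rewrite /Lg /log2 => /(congr1 (fun x => x * ln 2)).
rewrite mulfVK; last by rewrite gt_eqF // ln_gt0 // ltr1n.
rewrite mulr_natl -lnXn // => /ln_inj.
rewrite !posrE div1r invr_gt0 hdelta0 exprn_gt0 // => /(_ isT isT) <-.
by rewrite invrK.
Qed.

Lemma sum_if (R : realType) (T : finType) (P : pred T) (c : R) :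
  \sum_(w : T) (if P w then c else 0) = c * (\sum_(w : T) (P w : nat))%:R.
Proof.
rewrite natr_sum mulr_sumr; apply: eq_bigr => w _.
by case: (P w); rewrite ?mulr1 ?mulr0.
Qed.

Lemma bigmax_eq (R : realType) (T : finType) (f : T -> R) c x0 :
  (forall x, 0 <= f x <= c) -> f x0 = c -> \big[Num.max/0]_x f x = c.
Proof.
move=> hf hx0; apply/eqP; rewrite eq_le; apply/andP; split.
  apply: (big_ind (fun y => y <= c)).
  - by have /andP[h1 h2] := hf x0; apply: le_trans h2.
  - by move=> y z hy hz; rewrite ge_max hy hz.
  - by move=> i _; have /andP[_ ->] := hf i.
rewrite -hx0.
have : x0 \in index_enum T by rewrite mem_index_enum.
elim: (index_enum T) => [//|a r IH]; rewrite inE big_cons.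
case/orP => [/eqP ->|/IH h]; rewrite le_max ?lexx //.
by rewrite h orbT.
Qed.

Theorem theorem3 (R : realType) (n : nat) (delta : R) (m : int) (l v : nat)
    (hdelta0 : 0 < delta) (hdelta1 : delta < 1)
    (hm : m <= n%:Z)
    (hl : l%:R = (2 * m%:~R - n%:R - 2 * log2 (1 / delta)) / 3 :> R)
    (hv : v%:R = (n%:R - l%:R) / 2 :> R)
    (F : finFieldType) (hF : #|F| = (2 ^ (n - v))%N) :
  exists e : (n - v).-tuple F, is_basisF2 e /\
  exists W : {ffun n.-tuple bool -> R}, is_distr W /\ Hinf W = m%:~R /\
  exists A : seq bool -> F * seq bool -> F * seq bool,
    delta / 2 <= attack_prob e W A.
Proof.
have [mn [L [c0 [em hn [hv' L1] [hc0 hmn] hdel]]]] := params hdelta0 hdelta1 hm hl hv.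
subst m delta.
set k := (n - v)%N in hF *.
have hk : k = (v + l)%N by rewrite /k hn; lia.
have [g [g0 hg]] := prim F.
exists (pbasis k g); split; first by have hb := basis_e hF hg; exact: hb.
pose c : R := ((2:R) ^+ mn)^-1.
have c0' : 0 < c by rewrite invr_gt0 exprn_gt0.
pose W := [ffun w : n.-tuple bool => if posF (iota k c0) w then c else 0].
exists W.
have hsup : (\sum_(w : n.-tuple bool) (posF (iota k c0) w : nat))%N = (2 ^ mn)%N.
  have := @count_free n (iota k c0) (iota_uniq _ _).
  rewrite size_iota.
  have -> : (2 ^ n = 2 ^ mn * 2 ^ c0)%N by rewrite -expnD hc0 subnKC.
  move=> h; apply/eqP; rewrite -(eqn_pmul2r (expn_gt0 2 c0)) h //.
  by apply/allP => j; rewrite mem_iota; lia.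
split.
  split; first by move=> w; rewrite ffunE; case: ifP => _ //; apply: ltW.
  rewrite (eq_bigr (fun w : n.-tuple bool => if posF (iota k c0) w then c else 0)); last by move=> w _; rewrite ffunE.
  rewrite (sum_if (fun w : n.-tuple bool => posF (iota k c0) w)) hsup /c natrX mulVf // expf_neq0 // pnatr_eq0 //.
split.

  rewrite /Hinf (@bigmax_eq _ _ _ c [tuple of nseq n false]); first last.
  - rewrite ffunE; case: ifP => // /negP []; apply/allP => j _.
    by rewrite /= nth_nseq; case: ifP.
  - by move=> x; rewrite ffunE; case: ifP => _; rewrite ?lexx ?ltW.
  rewrite /log2 /c lnV ?posrE ?exprn_gt0 // lnXn //.
  have : ln (2:R) != 0 by rewrite gt_eqF // ln_gt0 // ltr1n.
  by move=> h2; rewrite mulNr opprK mulrnAl divff.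
exists (Adv n v l c0 L g).
have kpos : (1 <= k)%N by lia.
have hcount : forall i : F, i != 0 ->
   (\sum_(w : n.-tuple bool) (posF (iota k c0) w &&
      posF (iota (v - L) L) (coords (pbasis k g) (i * toF (pbasis k g) (take k w))%R) : nat))%N
   = (2 ^ (mn - L))%N.
  move=> i i0; have := count_good hF g0 hg hn hv' i0.
  have -> : (2 ^ n = 2 ^ (mn - L) * 2 ^ (L + c0))%N by rewrite -expnD; congr (2 ^ _)%N; lia.
  by move/eqP; rewrite eqn_pmul2r ?expn_gt0 // => /eqP.
pose G (i : F) (w : n.-tuple bool) : nat := ((i != 0) && (posF (iota k c0) w &&
      posF (iota (v - L) L) (coords (pbasis k g) (i * toF (pbasis k g) (take k w))%R))).
have hsum : (\sum_(w : n.-tuple bool) \sum_(i : F) G i w = (#|F|.-1) * 2 ^ (mn - L))%N.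
  rewrite exchange_big /=.
  rewrite (eq_bigr (fun i : F => if i != 0 then (2 ^ (mn - L))%N else 0%N)); last first.
    move=> i _; case: (eqVneq i 0) => [->|i0] /=; first by rewrite big1 // => w _; rewrite /G eqxx.
    by rewrite -(hcount i i0); apply: eq_bigr => w _; rewrite /G i0.
  by rewrite -big_mkcond /= sum_nat_const cardC1.
have hW0 : forall w, 0 <= W w by move=> w; rewrite ffunE; case: ifP => _; rewrite ?lexx ?ltW.
have hFpos : 0 < #|F|%:R :> R by rewrite ltr0n hF expn_gt0.
rewrite /attack_prob.
apply: (le_trans (y := (c / #|F|%:R) * ((\sum_(w : n.-tuple bool) \sum_(i : F) G i w)%N)%:R)).
  have e1 : ((2 ^ k).-1)%:R = (2:R) ^+ k - 1 by rewrite -subn1 natrB ?expn_gt0 // natrX.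
  rewrite hsum hF natrM e1 !natrX /c.
  have em : (2:R) ^+ mn = 2 ^+ (mn - L) * 2 ^+ L by rewrite -exprD subnK //; lia.
  have X2 : (2:R) <= 2 ^+ k.
    have : (2 <= 2 ^ k)%N by rewrite -{1}(expn1 2) leq_exp2l.
    by rewrite -(ler_nat R) natrX.
  rewrite em.
  move: X2; set X := (2:R) ^+ k; set A := (2:R) ^+ (mn - L); set B := (2:R) ^+ L => X2.
  have A0 : 0 < A by rewrite exprn_gt0.
  have B0 : 0 < B by rewrite exprn_gt0.
  have X0 : 0 < X by apply: lt_le_trans X2.
  have -> : (A * B)^-1 / X * ((X - 1) * A) = B^-1 / 2 + (X - 2) / (2 * X * B).
    by field; rewrite ?gt_eqF //.
  rewrite lerDl; apply: divr_ge0; first by rewrite subr_ge0.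
  by rewrite !mulr_ge0 // ltW.
rewrite natr_sum mulr_sumr; apply: ler_sum => w _; rewrite natr_sum mulr_sumr; apply: ler_sum => i _.
rewrite /G.
case: (eqVneq i 0) => [->|i0] /=.
  rewrite mulr0; apply: mulr_ge0; first exact: divr_ge0 (hW0 w) (ltW hFpos).
  by case: ifP.
case hs: (posF (iota k c0) w) => /=.
  case hgd: (posF (iota (v - L) L) _) => /=.
    rewrite mulr1 ffunE hs.
    move: (success hF g0 hg hn hv' i0 hs hgd) => /= ->.
    by rewrite mulr1.
  rewrite mulr0; apply: mulr_ge0; first exact: divr_ge0 (hW0 w) (ltW hFpos).
  by case: ifP.
rewrite mulr0; apply: mulr_ge0; first exact: divr_ge0 (hW0 w) (ltW hFpos).
by case: ifP.
Qed.
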